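(* Let $P$ be any poset on $\{1,2,\ldots,n\}$. Every weak $P$-partition $f$ has a unique expression as (i) $f=\sum_{k=1}^{\max(f)}\chi_{I_k}$ for a multiset $I_1\supseteq I_2\supseteq\cdots\supseteq I_{\max(f)}$ of nested nonempty order ideals of $P$; and also a unique expression as (ii) $f=\sum_{i=1}^{\nu(f)}\chi_{J_i}$ for a multiset $\{J_1,\ldots,J_{\nu(f)}\}$ of nonempty connected order ideals of $P$ which pairwise intersect trivially.
   Context: All posets are finite. A weak $P$-partition is a map $f:\{1,\ldots,n\}\to\mathbb{N}$ with $f(i)\ge f(j)$ whenever $i<_Pj$; $\max(f)$ is its maximum value. For $A\subseteq\{1,\ldots,n\}$, $\chi_A\in\{0,1\}^n$ is its indicator vector. An order ideal is a downward-closed subset of $P$; a connected order ideal is a nonempty order ideal whose induced Hasse diagram is connected. Two connected order ideals intersect trivially if they are disjoint or one contains the other. $\nu(f)$ denotes the number of terms (with multiplicity) in the expression of part (ii). *)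

(* Defs.v *)
From mathcomp Require Import all_boot.
Set Implicit Arguments. Unset Strict Implicit. Unset Printing Implicit Defensive.

(* A poset on {1,...,n} is represented by its (non-strict) order relation
   le on 'I_n (elements 0..n-1 standing for 1..n). *)
Definition is_poset (n : nat) (le : rel 'I_n) : Prop :=
  [/\ reflexive le, antisymmetric le & transitive le].

Definition plt n (le : rel 'I_n) : rel 'I_n := fun i j => (i != j) && le i j.

Definition pcovers n (le : rel 'I_n) : rel 'I_n :=
  fun i j => plt le i j && [forall k, ~~ (plt le i k && plt le k j)].

Definition weak_P_partition n (le : rel 'I_n) (f : 'I_n -> nat) : Prop :=
  forall i j, plt le i j -> f j <= f i.

Definition fmax n (f : 'I_n -> nat) : nat := \max_(i : 'I_n) f i.

Definition order_ideal n (le : rel 'I_n) (I : {set 'I_n}) : Prop :=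
  forall x y, y \in I -> le x y -> x \in I.

Definition hasse_on n (le : rel 'I_n) (I : {set 'I_n}) : rel 'I_n :=
  fun x y => [&& x \in I, y \in I & pcovers le x y || pcovers le y x].

Definition connected_order_ideal n (le : rel 'I_n) (I : {set 'I_n}) : Prop :=
  [/\ I != set0, order_ideal le I &
      forall x y, x \in I -> y \in I -> connect (hasse_on le I) x y].

Definition intersect_trivially n (I J : {set 'I_n}) : bool :=
  [disjoint I & J] || (I \subset J) || (J \subset I).

Definition chi_sum n (s : seq {set 'I_n}) (i : 'I_n) : nat :=
  \sum_(J <- s) (i \in J).

Definition nested_expr n (le : rel 'I_n) (f : 'I_n -> nat)
    (s : seq {set 'I_n}) : Prop :=
  [/\ size s = fmax f,
      forall k, k < size s -> nth set0 s k != set0 /\ order_ideal le (nth set0 s k),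
      forall k, k.+1 < size s -> nth set0 s k.+1 \subset nth set0 s k
    & forall i, f i = chi_sum s i].

(* (ii): multiset (seq up to permutation) of nonempty connected order ideals
   pairwise intersecting trivially *)
Definition connected_expr n (le : rel 'I_n) (f : 'I_n -> nat)
    (s : seq {set 'I_n}) : Prop :=
  [/\ forall J, J \in s -> connected_order_ideal le J,
      forall k l, k < size s -> l < size s -> k != l ->
        intersect_trivially (nth set0 s k) (nth set0 s l)
    & forall i, f i = chi_sum s i].

(* Main.v *)
Require Import Defs.
From mathcomp Require Import all_boot.
From mathcomp Require Import zify.
Set Implicit Arguments. Unset Strict Implicit. Unset Printing Implicit Defensive.

Lemma plt_trans n (le : rel 'I_n) : is_poset le -> forall x y z,
  plt le x y -> plt le y z -> plt le x z.
Proof.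
case=> _ asym tr x y z /andP[nxy lxy] /andP[nyz lyz]; apply/andP; split; last exact: tr lxy lyz.
apply/eqP=> exz; subst z; case/eqP: nxy; by apply: asym; rewrite lxy lyz.
Qed.

Lemma hasse_sym n (le : rel 'I_n) I : symmetric (hasse_on le I).
Proof. by move=> x y; rewrite /hasse_on andbCA orbC. Qed.

Lemma chain n (le : rel 'I_n) (I : {set 'I_n}) : is_poset le -> order_ideal le I ->
  forall x y, y \in I -> le x y -> connect (hasse_on le I) x y.
Proof.
move=> po id.
pose bt x y := [set z | plt le x z && plt le z y].
suff H : forall N x y, #|bt x y| <= N -> y \in I -> le x y -> connect (hasse_on le I) x y.
  by move=> x y; apply: (H _ x y (leqnn _)).
elim=> [|N IH] x y Hc yI lxy.
- case: (eqVneq x y) => [->|nxy]; first exact: connect0.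
  apply: connect1; rewrite /hasse_on (id _ _ yI lxy) yI /= /pcovers /plt nxy lxy /=.
  apply/orP; left; apply/forallP=> k; apply/negP=> Hk.
  have : k \in bt x y by rewrite inE.
  by move: Hc; rewrite leqn0 cards_eq0 => /eqP ->; rewrite inE.
- case: (eqVneq x y) => [->|nxy]; first exact: connect0.
  have pxy : plt le x y by rewrite /plt nxy lxy.
  case: (eqVneq (bt x y) set0) => [H0|/set0Pn[z]].
    apply: (IH x y) => //; by rewrite H0 cards0.
  rewrite inE => /andP[pxz pzy].
  have zI : z \in I by apply: (id _ _ yI); case/andP: pzy.
  apply: (connect_trans (y:=z)).
  + apply: IH => //; last by case/andP: pxz.
    have : #|bt x z| < #|bt x y|.
      apply: proper_card; apply/properP; split.
        by apply/subsetP=> w; rewrite !inE => /andP[-> Hw] /=; apply: plt_trans Hw pzy.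
      by exists z; rewrite !inE ?pxz ?pzy //= /plt eqxx.
    by move: Hc; lia.
  + apply: IH => //; last by case/andP: pzy.
    have : #|bt z y| < #|bt x y|.
      apply: proper_card; apply/properP; split.
        by apply/subsetP=> w; rewrite !inE => /andP[Hw ->]; rewrite andbT; apply: plt_trans pxz Hw.
      by exists z; rewrite !inE ?pxz ?pzy //= /plt eqxx.
    by move: Hc; lia.
Qed.

Definition comp n (le : rel 'I_n) (S : {set 'I_n}) x :=
  [set y in S | connect (hasse_on le S) x y].
Definition comps n (le : rel 'I_n) (S : {set 'I_n}) :=
  equivalence_partition (connect (hasse_on le S)) S.

Lemma comps_partition n (le : rel 'I_n) S : partition (comps le S) S.
Proof.
apply: equivalence_partitionP => x y z _ _ _; split; first exact: connect0.
have cs := sym_connect_sym (hasse_sym le S).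
move=> cxy; apply/idP/idP=> H.
- by apply: connect_trans H; rewrite cs.
- exact: connect_trans cxy H.
Qed.

Lemma connect_restrict (T : finType) (e : rel T) (C : pred T) x y :
  C x -> (forall a b, C a -> e a b -> C b) -> connect e x y ->
  connect [rel a b | [&& C a, C b & e a b]] x y.
Proof.
move=> Cx cl /connectP[p pth ->]; elim: p x Cx pth => [|z p IH] x Cx /=.
  by move=> _; exact: connect0.
case/andP=> exz pth; have Cz := cl _ _ Cx exz.
apply: (connect_trans (y:=z)); first by apply: connect1; rewrite /= Cx Cz exz.
exact: IH.
Qed.

Lemma connect_closed (T : finType) (e : rel T) (C : pred T) x y :
  (forall a b, e a b -> C a -> C b) -> C x -> connect e x y -> C y.
Proof.
move=> cl Cx /connectP[p pth ->]; elim: p x Cx pth => [|z p IH] x Cx //=.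
case/andP=> exz pth; exact: IH (cl _ _ exz Cx) pth.
Qed.

Lemma comp_coi n (le : rel 'I_n) S x : is_poset le -> order_ideal le S ->
  x \in S -> connected_order_ideal le (comp le S x).
Proof.
move=> po id xS.
have cs := sym_connect_sym (hasse_sym le S).
have xC : x \in comp le S x by rewrite inE xS connect0.
split.
- by apply/set0Pn; exists x.
- move=> a b; rewrite !inE => /andP[bS cxb] lab.
  have aS := id _ _ bS lab; rewrite aS /=.
  apply: connect_trans cxb _; rewrite cs; exact: chain.
- move=> a b aC bC.
  have cab : connect (hasse_on le S) a b.
    move: aC bC; rewrite !inE => /andP[_ cxa] /andP[_ cxb].
    by apply: connect_trans cxb; rewrite cs.
  have cr := connect_restrict (C := mem (comp le S x)) aC _ cab.
  apply: connect_sub (cr _) => [u v|].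
  + rewrite /= => /and3P[uC vC huv]; apply: connect1.
    by rewrite /hasse_on uC vC; case/and3P: huv.
  + move=> u v uC huv; move: uC; rewrite !inE => /andP[_ cxu].
    case/and3P: (huv) => _ -> _ /=; exact: connect_trans cxu (connect1 huv).
Qed.

Lemma sub_comp n (le : rel 'I_n) (S K : {set 'I_n}) (k x : 'I_n) :
  K \subset S -> (forall a b, a \in K -> b \in K -> connect (hasse_on le K) a b) ->
  k \in K -> k \in comp le S x -> K \subset comp le S x.
Proof.
move=> KS Kc kK; rewrite inE => /andP[kS cxk]; apply/subsetP=> b bK.
rewrite inE (subsetP KS _ bK) /=; apply: connect_trans cxk _.
apply: connect_sub (Kc _ _ kK bK) => u v huv; apply: connect1.
by move: huv; rewrite /hasse_on => /and3P[uK vK ->]; rewrite (subsetP KS _ uK) (subsetP KS _ vK).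
Qed.

Lemma chi_count n (t : seq {set 'I_n}) i : chi_sum t i = count (fun J : {set 'I_n} => i \in J) t.
Proof. by rewrite /chi_sum; elim: t => [|J t IH]; rewrite ?big_nil ?big_cons ?IH. Qed.

Lemma chi_pos n (t : seq {set 'I_n}) J i : J \in t -> i \in J -> 0 < chi_sum t i.
Proof. by move=> Jt iJ; rewrite chi_count -has_count; apply/hasP; exists J. Qed.

Lemma chi_pos_ex n (t : seq {set 'I_n}) i : 0 < chi_sum t i -> exists2 J, J \in t & i \in J.
Proof. by rewrite chi_count -has_count => /hasP. Qed.

Lemma chi_cat n (t u : seq {set 'I_n}) i : chi_sum (t ++ u) i = chi_sum t i + chi_sum u i.
Proof. by rewrite /chi_sum big_cat. Qed.

Lemma chi_perm n (t u : seq {set 'I_n}) i : perm_eq t u -> chi_sum t i = chi_sum u i.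
Proof. by move=> H; rewrite /chi_sum (perm_big _ H). Qed.

Lemma chi_comps n (le : rel 'I_n) S i : chi_sum (enum (comps le S)) i = (i \in S).
Proof.
case/and3P: (comps_partition le S) => /eqP cov triv _.
rewrite /chi_sum big_enum /=.
case: (boolP (i \in S)) => iS.
- have iC : i \in cover (comps le S) by rewrite cov.
  rewrite (bigD1 (pblock (comps le S) i)) /= ?pblock_mem // mem_pblock iC big1 //.
  move=> J /andP[JP nJ]; case: (boolP (i \in J)) => // iJ; case/eqP: nJ.
  by rewrite (def_pblock triv JP iJ).
- rewrite big1 // => J JP; case: (boolP (i \in J)) => // iJ; case/negP: iS.
  by rewrite -cov; apply/bigcupP; exists J.
Qed.

Definition cexpr n (le : rel 'I_n) (g : 'I_n -> nat) (t : seq {set 'I_n}) :=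
  [/\ forall J, J \in t -> connected_order_ideal le J,
      {in t &, forall A B, intersect_trivially A B}
    & forall i, g i = chi_sum t i].

Lemma cexpr_of n (le : rel 'I_n) g t : connected_expr le g t -> cexpr le g t.
Proof.
case=> H1 H2 H3; split=> // A B /(nthP set0)[k kt <-] /(nthP set0)[l lt <-].
case: (eqVneq k l) => [->|nkl]; last exact: H2.
by rewrite /intersect_trivially subxx !orbT.
Qed.

Lemma cexpr_to n (le : rel 'I_n) g t : cexpr le g t -> connected_expr le g t.
Proof.
case=> H1 H2 H3; split=> // k l kt lt _; apply: H2; exact: mem_nth.
Qed.

Fixpoint canon n (le : rel 'I_n) (m : nat) (g : 'I_n -> nat) : seq {set 'I_n} :=
  if m is m'.+1 then enum (comps le [set i | 0 < g i]) ++ canon le m' (fun i => (g i).-1)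
  else [::].

Lemma it_sym n (A B : {set 'I_n}) : intersect_trivially A B = intersect_trivially B A.
Proof. by rewrite /intersect_trivially disjoint_sym orbAC -!orbA. Qed.

Lemma it_comp n (le : rel 'I_n) (S B : {set 'I_n}) x : x \in S -> connected_order_ideal le B ->
  B \subset S -> intersect_trivially (comp le S x) B.
Proof.
move=> xS [_ _ Bc] BS; rewrite /intersect_trivially.
case: (boolP [disjoint comp le S x & B]) => //; rewrite -setI_eq0 => /set0Pn[k].
rewrite inE => /andP[kA kB]; by rewrite (sub_comp BS Bc kB kA) !orbT.
Qed.

Lemma in_comps n (le : rel 'I_n) (S J : {set 'I_n}) : J \in comps le S -> exists2 x, x \in S & J = comp le S x.
Proof. by case/imsetP=> x xS ->; exists x. Qed.

Lemma canon_ok n (le : rel 'I_n) m g : is_poset le -> weak_P_partition le g -> fmax g <= m ->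
  cexpr le g (canon le m g).
Proof.
elim: m g => [|m IH] g po wg hm.
  split=> // i; rewrite /chi_sum big_nil.
  by move/bigmax_leqP: hm => /(_ i isT); rewrite leqn0 => /eqP.
set S := [set i | 0 < g i]; set g1 := fun i => (g i).-1.
have wg1 : weak_P_partition le g1 by move=> i j H; have := wg i j H; rewrite /g1; lia.
have hm1 : fmax g1 <= m.
  apply/bigmax_leqP=> i _; move/bigmax_leqP: hm => /(_ i isT); rewrite /g1; lia.
have Sid : order_ideal le S.
  move=> a b; rewrite !inE => gb lab; case: (eqVneq a b) => [->//|nab].
  have := wg a b; rewrite /plt nab lab => /(_ isT); lia.
have [c1 c2 c3] := IH g1 po wg1 hm1.
have subS : forall B, B \in canon le m g1 -> B \subset S.
  move=> B Bt; apply/subsetP=> b bB; have := chi_pos Bt bB; rewrite -c3 inE /g1; lia.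
split.
- move=> J; rewrite /= mem_cat => /orP[|/c1//].
  rewrite mem_enum => /in_comps[x xS ->]; exact: comp_coi.
- move=> A B; rewrite /= !mem_cat => /orP[Ac|At] /orP[Bc|Bt].
  + case: (eqVneq A B) => [->|nAB]; first by rewrite /intersect_trivially subxx !orbT.
    case/and3P: (comps_partition le S) => _ /trivIsetP triv _.
    by rewrite /intersect_trivially (triv A B) // -mem_enum.
  + move: Ac; rewrite mem_enum => /in_comps[x xS ->]; apply: it_comp => //; [exact: c1|exact: subS].
  + move: Bc; rewrite mem_enum it_sym => /in_comps[x xS ->]; apply: it_comp => //; [exact: c1|exact: subS].
  + exact: c2.
- move=> i; rewrite /= chi_cat chi_comps -c3 inE /g1; lia.
Qed.

Lemma perm_split (T : eqType) (u t : seq T) : uniq u -> {subset u <= t} ->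
  exists t', perm_eq t (u ++ t').
Proof.
elim: u t => [|x u IH] t /=; first by move=> _ _; exists t.
case/andP=> xu uu sub.
have xt : x \in t by apply: sub; rewrite inE eqxx.
have pt := perm_to_rem xt.
have [t' pt'] : exists t', perm_eq (rem x t) (u ++ t').
  apply: IH => // y yu.
  have : y \in t by apply: sub; rewrite inE yu orbT.
  rewrite (perm_mem pt) inE => /orP[/eqP Hy|//]; subst y; by rewrite yu in xu.
by exists t'; apply: (perm_trans pt); rewrite perm_cons.
Qed.

Lemma comp_in_t n (le : rel 'I_n) g t x : cexpr le g t ->
  x \in [set i | 0 < g i] -> comp le [set i | 0 < g i] x \in t.
Proof.
move=> [c1 c2 c3]; set S := [set i | 0 < g i] => xS.
have [J Jt xJ] : exists2 J, J \in t & x \in J by apply: chi_pos_ex; rewrite -c3; move: xS; rewrite inE.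
have PJ : (J \in t) && (x \in J) by rewrite Jt xJ.
case: (@arg_maxnP _ J (fun K : {set 'I_n} => (K \in t) && (x \in K)) (fun K : {set 'I_n} => #|K|) PJ) => M /andP[Mt xM] Mmax.
have MS : M \subset S.
  by apply/subsetP=> b bM; have := chi_pos Mt bM; rewrite -c3 inE.
have [Mne Mid Mc] := c1 M Mt.
have xC : x \in comp le S x by rewrite inE xS connect0.
have MC := sub_comp MS Mc xM xC.
suff CM : comp le S x \subset M.
  have -> : comp le S x = M by apply/eqP; rewrite eqEsubset CM MC.
  exact: Mt.
apply/subsetP=> y; rewrite inE => /andP[yS cxy].
apply: (connect_closed (C := fun z => z \in M)) cxy => // a b hab aM.
move: hab; rewrite /hasse_on => /and3P[aS bS /orP[cab|cba]].
- have [K Kt bK] : exists2 K, K \in t & b \in K by apply: chi_pos_ex; rewrite -c3; move: bS; rewrite inE.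
  have [_ Kid _] := c1 K Kt.
  have aK : a \in K by apply: (Kid a b bK); case/andP: cab => /andP[].
  have := c2 M K Mt Kt; rewrite /intersect_trivially => /orP[/orP[dis|MK]|KM].
  + by rewrite (disjointFr dis aM) in aK.
  + have HK : (K \in t) && (x \in K) by rewrite Kt (subsetP MK x xM).
    have cK := Mmax K HK.
    have /eqP -> : M == K by rewrite eqEcard MK; exact: cK.
    exact: bK.
  + exact: (subsetP KM).
- by apply: (Mid b a aM); case/andP: cba => /andP[].
Qed.

Lemma canon_uniq n (le : rel 'I_n) m g t : fmax g <= m -> cexpr le g t ->
  perm_eq t (canon le m g).
Proof.
elim: m g t => [|m IH] g t hm ct.
  case: t ct => [//|J t] [c1 _ c3].
  have [Jne _ _] := c1 J (mem_head _ _).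
  case/set0Pn: Jne => i iJ.
  have := chi_pos (mem_head J t) iJ; rewrite -c3.
  by move/bigmax_leqP: hm => /(_ i isT); rewrite leqn0 => /eqP ->.
set S := [set i | 0 < g i]; set g1 := fun i => (g i).-1.
have hm1 : fmax g1 <= m.
  apply/bigmax_leqP=> i _; move/bigmax_leqP: hm => /(_ i isT); rewrite /g1; lia.
have [t' pt] : exists t', perm_eq t (enum (comps le S) ++ t').
  apply: perm_split; first exact: enum_uniq.
  by move=> C; rewrite mem_enum => /in_comps[x xS ->]; apply: comp_in_t.
case: ct => [c1 c2 c3].
have sub : {subset t' <= t} by move=> J Jt; rewrite (perm_mem pt) mem_cat Jt orbT.
have ct' : cexpr le g1 t'.
  split.
  - by move=> J /sub; apply: c1.
  - by move=> A B /sub At /sub Bt; apply: c2.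
  - move=> i; have := c3 i; rewrite (chi_perm i pt) chi_cat chi_comps inE /g1; lia.
apply: (perm_trans pt); rewrite /= perm_cat2l; exact: IH.
Qed.

Lemma sum_lt a M : \sum_(k <- iota 0 M) (k < a) = minn a M.
Proof.
elim: M => [|M IH]; first by rewrite big_nil minn0.
rewrite -addn1 iotaD big_cat big_seq1 IH /=; lia.
Qed.

Lemma anti_sum (b : nat -> bool) L : (forall j, j.+1 < L -> b j.+1 -> b j) ->
  forall k, k < L -> b k = (k < \sum_(0 <= j < L) b j).
Proof.
move=> H.
have down : forall j k, j <= k -> k < L -> b k -> b j.
  move=> j; elim=> [|k IHk]; first by rewrite leqn0 => /eqP ->.
  rewrite leq_eqVlt => /orP[/eqP -> //|jk] kL bk.
  by apply: IHk => //; [lia | apply: H].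
move=> k kL.
case: (boolP (b k)) => bk.
- rewrite (big_cat_nat (leq0n k.+1) kL) /=.
  rewrite (eq_big_nat _ _ (F2 := fun _ => 1) (m := 0) (n := k.+1)) ?sum_nat_const_nat; first lia.
  move=> j /andP[_ jk]; rewrite (down j k) //; exact: ltnW.
- rewrite (big_cat_nat (leq0n k) (ltnW kL)) /=.
  rewrite [X in _ + X]big_nat_cond [X in _ + X]big1 ?addn0; last first.
    move=> j /andP[/andP[kj jL] _]; case: (boolP (b j)) => // bj.
    by rewrite (down k j) in bk.
  have : \sum_(0 <= j < k) b j <= \sum_(0 <= j < k) 1 by apply: leq_sum => j _; case: (b j).
  rewrite sum_nat_const_nat; lia.
Qed.

Definition levs n (f : 'I_n -> nat) := mkseq (fun k => [set i | k < f i]) (fmax f).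

Lemma levs_ok n (le : rel 'I_n) f : is_poset le -> weak_P_partition le f -> nested_expr le f (levs f).
Proof.
move=> po wf; split.
- by rewrite size_mkseq.
- move=> k; rewrite size_mkseq => kM; rewrite nth_mkseq //; split.
  + apply/set0Pn; case: (pickP (fun i => k < f i)) => [i ki|H]; first by exists i; rewrite inE.
    move: kM; rewrite leqNgt => /negP; case.
    apply/bigmax_leqP=> i _; rewrite leqNgt H //.
  + move=> x y; rewrite !inE => ky lxy; case: (eqVneq x y) => [->//|nxy].
    have := wf x y; rewrite /plt nxy lxy => /(_ isT); lia.
- move=> k; rewrite size_mkseq => kM; rewrite !nth_mkseq //; last exact: ltnW.
  by apply/subsetP=> i; rewrite !inE; lia.
- move=> i; rewrite /chi_sum /levs /mkseq big_map.
  under eq_bigr => k _ do rewrite inE.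
  rewrite sum_lt /fmax; apply/esym/minn_idPl; exact: leq_bigmax.
Qed.

Lemma levs_uniq n (le : rel 'I_n) f t : nested_expr le f t -> t = levs f.
Proof.
case=> sz _ nest chi; apply: (eq_from_nth (x0 := set0)); first by rewrite size_mkseq.
move=> k kt; rewrite nth_mkseq -?sz //; apply/setP=> i; rewrite inE chi /chi_sum (big_nth set0).
apply: (anti_sum (b := fun j => i \in nth set0 t j)) => // j jL /=.
exact: (subsetP (nest j jL)).
Qed.

Theorem proposition2p5 (n : nat) (le : rel 'I_n) (f : 'I_n -> nat) :
  is_poset le -> weak_P_partition le f ->
  (exists s, nested_expr le f s /\
     forall t, nested_expr le f t -> t = s) /\
  (exists s, connected_expr le f s /\
     forall t, connected_expr le f t -> perm_eq t s).
Proof.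
move=> po wf; split.
- exists (levs f); split; [exact: levs_ok | exact: levs_uniq].
- exists (canon le (fmax f) f); split.
  + apply: cexpr_to; exact: canon_ok.
  + move=> t /cexpr_of ct; exact: canon_uniq.
Qed.
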